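(* Let $(G,+,\bullet)$ be an interchange near ring. Then $(G,\bullet)$ is associative if and only if for every $x\in G$ the following three identities hold: (i) $(x\bullet 0)\bullet 0 = x\bullet 0$; (ii) $(0\bullet x)\bullet 0 = 0\bullet (x\bullet 0)$; (iii) $0\bullet(0\bullet x) = 0\bullet x$.
   Context: An interchange near ring is a triple $(G,+,\bullet)$ where $(G,+)$ is a group (written additively, not necessarily abelian, with identity $0$ and inverses $-x$) and $\bullet$ is a binary operation on $G$ satisfying the interchange law $(w+x)\bullet(y+z) = (w\bullet y)+(x\bullet z)$ for all $w,x,y,z\in G$. No other axioms are imposed on $\bullet$. *)

(* Defs.v *)
Definition is_group (G : Type) (add : G -> G -> G) (zero : G) (opp : G -> G) : Prop :=
  (forall x y z, add x (add y z) = add (add x y) z) /\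
  (forall x, add zero x = x) /\ (forall x, add x zero = x) /\
  (forall x, add (opp x) x = zero) /\ (forall x, add x (opp x) = zero).

Definition interchange (G : Type) (add mul : G -> G -> G) : Prop :=
  forall w x y z, mul (add w x) (add y z) = add (mul w y) (mul x z).

Definition is_interchange_near_ring (G : Type) (add : G -> G -> G) (zero : G)
  (opp : G -> G) (mul : G -> G -> G) : Prop :=
  is_group G add zero opp /\ interchange G add mul.

Definition associative_op (G : Type) (mul : G -> G -> G) : Prop :=
  forall x y z, mul x (mul y z) = mul (mul x y) z.

(* Main.v *)
Require Import Defs.

Theorem lemma2p2 (G : Type) (add : G -> G -> G) (zero : G) (opp : G -> G)
  (mul : G -> G -> G) :
  is_interchange_near_ring G add zero opp mul ->
  (associative_op G mul <->
   (forall x : G,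
      mul (mul x zero) zero = mul x zero /\
      mul (mul zero x) zero = mul zero (mul x zero) /\
      mul zero (mul zero x) = mul zero x)).
Proof.
  intros [[Ha [Hl [Hr [Hnl Hnr]]]] Hi].
  split.
  - intros A.
      assert (E : mul zero zero = zero).
      { assert (E1 : add (mul zero zero) (mul zero zero) = mul zero zero).
        { rewrite <- Hi. rewrite Hl. reflexivity. }
        assert (E2 : add (opp (mul zero zero)) (add (mul zero zero) (mul zero zero))
                     = add (opp (mul zero zero)) (mul zero zero)) by (rewrite E1; reflexivity).
        rewrite Ha, Hnl, Hl in E2. exact E2. }
    intros x. split; [|split].
    + rewrite <- A, E. reflexivity.
    + symmetry. apply A.
    + rewrite A, E. reflexivity.
  - intros H.
    assert (Dec : forall x y, mul x y = add (mul x zero) (mul zero y)).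
    { intros x y. rewrite <- Hi. rewrite Hr, Hl. reflexivity. }
    assert (F : forall a b, mul (add a b) zero = add (mul a zero) (mul b zero)).
    { intros a b. rewrite <- Hi. rewrite Hl. reflexivity. }
    assert (Gh : forall a b, mul zero (add a b) = add (mul zero a) (mul zero b)).
    { intros a b. rewrite <- Hi. rewrite Hl. reflexivity. }
    intros x y z.
    rewrite (Dec y z), (Dec x (add _ _)), Gh.
    rewrite (Dec x y), (Dec (add _ _) z), F.
    destruct (H x) as [H1 _]. destruct (H y) as [_ [H2 _]]. destruct (H z) as [_ [_ H3]].
    rewrite H1, H2, H3. rewrite Ha. reflexivity.
Qed.
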